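(* Let $\mathfrak{g}$ be a nilpotent real Lie algebra endowed with a complex structure $J$. If the center $\xi$ of $\mathfrak{g}$ is not $J$-invariant, then $(\mathfrak{g},J)$ does not admit any SKT inner product.
   Context: A complex structure on $\mathfrak{g}$ is $J$ with $J^2=-\mathrm{Id}$ and $[X,Y]-[JX,JY]+J[JX,Y]+J[X,JY]=0$. A $J$-compatible inner product $g$ (i.e. $g(JX,JY)=g(X,Y)$) is SKT if the $3$-form $c(X,Y,Z)=-g([JX,JY],Z)-g([JY,JZ],X)-g([JZ,JX],Y)$ is closed under the Chevalley–Eilenberg differential, equivalently if the fundamental form $\omega=g(J\cdot,\cdot)$ satisfies $\partial\bar\partial\omega=0$. *)

(* Defs.v *)
From mathcomp Require Import all_boot all_order all_algebra.
From mathcomp Require Import reals.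
Set Implicit Arguments. Unset Strict Implicit. Unset Printing Implicit Defensive.
Import Order.TTheory GRing.Theory Num.Theory.
Local Open Scope ring_scope.

(* A finite-dimensional real Lie algebra is modelled as R^n = 'rV[R]_n with a
   bracket br.  Endomorphisms (J) and bilinear forms (G) are n x n matrices;
   a linear map J acts on row vectors by X |-> X *m J. *)

Record is_lie_bracket (R : nzRingType) (n : nat)
    (br : 'rV[R]_n -> 'rV[R]_n -> 'rV[R]_n) : Prop := {
  br_linl : forall (a : R) x y z, br (a *: x + y) z = a *: br x z + br y z;
  br_linr : forall (a : R) x y z, br z (a *: x + y) = a *: br z x + br z y;
  br_alt : forall x, br x x = 0;
  br_jacobi : forall x y z,
    br x (br y z) + br y (br z x) + br z (br x y) = 0 }.

(* Nilpotent: some iterated bracket ad_{x_1} ... ad_{x_k} vanishes identically,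
   i.e. the k-th term of the lower central series is zero. *)
Definition lie_nilpotent (R : nzRingType) (n : nat)
    (br : 'rV[R]_n -> 'rV[R]_n -> 'rV[R]_n) : Prop :=
  exists k : nat, forall (s : seq 'rV[R]_n) (y : 'rV[R]_n),
    size s = k -> foldr br y s = 0.

Definition in_center (R : nzRingType) (n : nat)
    (br : 'rV[R]_n -> 'rV[R]_n -> 'rV[R]_n) (z : 'rV[R]_n) : Prop :=
  forall x, br z x = 0.

Definition center_J_invariant (R : nzRingType) (n : nat)
    (br : 'rV[R]_n -> 'rV[R]_n -> 'rV[R]_n) (J : 'M[R]_n) : Prop :=
  forall z, in_center br z -> in_center br (z *m J).

(* Complex structure: J^2 = -Id and vanishing Nijenhuis tensor. *)
Definition complex_structure (R : nzRingType) (n : nat)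
    (br : 'rV[R]_n -> 'rV[R]_n -> 'rV[R]_n) (J : 'M[R]_n) : Prop :=
  J *m J = - 1%:M /\
  forall X Y, br X Y - br (X *m J) (Y *m J)
              + br (X *m J) Y *m J + br X (Y *m J) *m J = 0.

Definition bform (R : nzRingType) (n : nat) (G : 'M[R]_n) (x y : 'rV[R]_n) : R :=
  (x *m G *m y^T) ord0 ord0.

Definition is_inner_product (R : numDomainType) (n : nat) (G : 'M[R]_n) : Prop :=
  G^T = G /\ forall x : 'rV[R]_n, x != 0 -> 0 < bform G x x.

Definition J_compatible (R : nzRingType) (n : nat) (J G : 'M[R]_n) : Prop :=
  forall X Y, bform G (X *m J) (Y *m J) = bform G X Y.

Definition torsion3 (R : nzRingType) (n : nat)
    (br : 'rV[R]_n -> 'rV[R]_n -> 'rV[R]_n) (J G : 'M[R]_n)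
    (X Y Z : 'rV[R]_n) : R :=
  - bform G (br (X *m J) (Y *m J)) Z
  - bform G (br (Y *m J) (Z *m J)) X
  - bform G (br (Z *m J) (X *m J)) Y.

(* Chevalley--Eilenberg differential of a 3-form (trivial coefficients):
   dw(X0,..,X3) = sum_{i<j} (-1)^{i+j} w([Xi,Xj], X0,..^i..^j..,X3) *)
Definition CE_d3 (R : nzRingType) (n : nat)
    (br : 'rV[R]_n -> 'rV[R]_n -> 'rV[R]_n)
    (w : 'rV[R]_n -> 'rV[R]_n -> 'rV[R]_n -> R)
    (X0 X1 X2 X3 : 'rV[R]_n) : R :=
  - w (br X0 X1) X2 X3 + w (br X0 X2) X1 X3 - w (br X0 X3) X1 X2
  - w (br X1 X2) X0 X3 + w (br X1 X3) X0 X2 - w (br X2 X3) X0 X1.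

Definition is_SKT (R : numDomainType) (n : nat)
    (br : 'rV[R]_n -> 'rV[R]_n -> 'rV[R]_n) (J G : 'M[R]_n) : Prop :=
  [/\ is_inner_product G, J_compatible J G &
      forall X0 X1 X2 X3, CE_d3 br (torsion3 br J G) X0 X1 X2 X3 = 0].

(* Main.v *)
Require Import Defs.
From mathcomp Require Import all_boot all_order all_algebra.
From mathcomp Require Import reals.
From Stdlib Require Import Classical.
From mathcomp Require Import lra.
Set Implicit Arguments. Unset Strict Implicit. Unset Printing Implicit Defensive.
Import Order.TTheory GRing.Theory Num.Theory.
Local Open Scope ring_scope.

Section Helpers.
Variables (R : realType) (n : nat) (br : 'rV[R]_n -> 'rV[R]_n -> 'rV[R]_n).
Hypothesis Hbr : is_lie_bracket br.

Lemma brDl x y z : br (x + y) z = br x z + br y z.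
Proof. by have := br_linl Hbr 1 x y z; rewrite !scale1r. Qed.
Lemma brDr x y z : br z (x + y) = br z x + br z y.
Proof. by have := br_linr Hbr 1 x y z; rewrite !scale1r. Qed.
Lemma br0l z : br 0 z = 0.
Proof. by have := brDl 0 0 z; rewrite addr0 -{1}[br 0 z]addr0 => /addrI. Qed.
Lemma br0r z : br z 0 = 0.
Proof. by have := brDr 0 0 z; rewrite addr0 -{1}[br z 0]addr0 => /addrI. Qed.
Lemma brNl x z : br (- x) z = - br x z.
Proof. by have := br_linl Hbr (-1) x 0 z; rewrite addr0 br0l addr0 !scaleN1r. Qed.
Lemma brNr x z : br z (- x) = - br z x.
Proof. by have := br_linr Hbr (-1) x 0 z; rewrite addr0 br0r addr0 !scaleN1r. Qed.
Lemma br_anti x y : br x y = - br y x.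
Proof.
have := br_alt Hbr (x + y); rewrite brDl !brDr !(br_alt Hbr) add0r addr0.
by move/eqP; rewrite addr_eq0 => /eqP.
Qed.

Lemma max_lemma (Q : seq 'rV[R]_n -> 'rV[R]_n -> Prop) (k : nat) :
  (exists y, Q [::] y) -> (forall s y, size s = k -> ~ Q s y) ->
  exists s y, Q s y /\ forall x, ~ Q (x :: s) y.
Proof.
move=> [y0 Hy0] Hk; apply: NNPP => H.
suff: forall j, exists s y, size s = j /\ Q s y.
  by move=> /(_ k) [s [y [Hs HQ]]]; exact: (Hk s y Hs HQ).
elim=> [|j [s [y [Hs HQ]]]]; first by exists [::], y0.
have : ~ forall x, ~ Q (x :: s) y by move=> Hx; apply: H; exists s, y.
move=> /not_all_not_ex [x Hx]; exists (x :: s), y; split=> //=; by rewrite Hs.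
Qed.

End Helpers.

Theorem proposition3p5 (R : realType) (n : nat)
    (br : 'rV[R]_n -> 'rV[R]_n -> 'rV[R]_n) (J : 'M[R]_n) :
  is_lie_bracket br -> lie_nilpotent br -> complex_structure br J ->
  ~ center_J_invariant br J ->
  forall G : 'M[R]_n, ~ is_SKT br J G.
Proof.
move=> Hbr [k Hk] [HJ2 HNij] HnotJ G [[_ Hpos] Hcompat Hd].
have [Z [HZ HW]] : exists Z, in_center br Z /\ ~ in_center br (Z *m J).
  apply: NNPP => H; apply: HnotJ => z Hz; apply: NNPP => Hz'.
  by apply: H; exists z.
set W := Z *m J in HW.
have [x0 Hx0] : exists x, br W x <> 0.
  by apply: NNPP => H; apply: HW => x; apply: NNPP => Hx; apply: H; exists x.
have [s [y [Hne Hmax]]] : exists s y, (br W (foldr br y s) <> 0) /\ (forall x, ~ (br W (foldr br y (x :: s)) <> 0)).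
  apply: (@max_lemma R n (fun s y => br W (foldr br y s) <> 0) k).
    by exists x0.
  by move=> s y Hs; rewrite Hk // (br0r Hbr).
have hmax1 : forall x, br W (br x (foldr br y s)) = 0.
  by move=> x; apply: NNPP; exact: Hmax.
set Y := foldr br y s in Hne hmax1.
have brZ : forall x, br Z x = 0 by [].
have brZr : forall x, br x Z = 0 by move=> x; rewrite (br_anti Hbr) brZ oppr0.
have WJ : W *m J = - Z by rewrite /W -mulmxA HJ2 mulmxN mulmx1.
have hN : forall X, br W (X *m J) = br W X *m J.
  move=> X; have := HNij Z X; rewrite -/W !brZ mul0mx sub0r addr0 addrC.
  by move/eqP; rewrite subr_eq0 => /eqP.
set V := Y *m J.
set P := br W Y.
have hWP : br W P = 0 by exact: hmax1.
have hWU : br W (br Y V) = 0 by rewrite [br Y V](br_anti Hbr) (brNr Hbr) hmax1 oppr0.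
have bf0l : forall y, bform G 0 y = 0 by move=> y0; rewrite /bform !mul0mx mxE.
have bf0r : forall x, bform G x 0 = 0 by move=> x; rewrite /bform trmx0 mulmx0 mxE.
have bfNl : forall x y, bform G (- x) y = - bform G x y.
  by move=> x y1; rewrite /bform !mulNmx mxE.
have bfNr : forall x y, bform G x (- y) = - bform G x y.
  by move=> x y1; rewrite /bform linearN mulmxN mxE.
have Jac := br_jacobi Hbr W Y V.
have := Hd Z W Y V.
rewrite /CE_d3 /torsion3 -/W !brZ !mul0mx !(br0l Hbr) !(br0r Hbr) !bf0l !bf0r.
have VJ : V *m J = - Y by rewrite /V -mulmxA HJ2 mulmxN mulmx1.
have PJJ : P *m J *m J = - P by rewrite -mulmxA HJ2 mulmxN mulmx1.
have hWV : br W V = P *m J by rewrite /V hN.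
have e1 : br (P *m J) W = 0 by rewrite (br_anti Hbr) hN hWP mul0mx oppr0.
have e3 : br P W = 0 by rewrite (br_anti Hbr) hWP oppr0.
have e4 : br (br Y V *m J) W = 0 by rewrite (br_anti Hbr) hN hWU mul0mx oppr0.
have e5 : br W Z = 0 by [].
rewrite -/P WJ VJ hWV PJJ ?e1 ?(brNr Hbr) -/P ?(brNl Hbr) ?e3 ?oppr0 ?e4 ?(brNr Hbr) ?e5.
have jac' : br (Y *m J) P = br Y (P *m J).
  move: Jac; rewrite hWU add0r [br V W](br_anti Hbr) hWV (brNr Hbr) -/P addrC.
  by move/eqP; rewrite subr_eq0 => /eqP.
rewrite jac' Hcompat brZ !bfNl ?oppr0 !bf0l => H.
have hP : P != 0 by apply/eqP.
have := Hpos P hP.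
lra.
Qed.
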